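(* Let $f:\mathbb R^{d_x}\to\mathbb R^{d_y}$ be a $\textsc{ReLU}$+$\textsc{Step}$ network of width $d_x$ in which at least one hidden neuron uses the $\textsc{Step}$ activation. Then every level set of $f$ (i.e., every connected component of $f^{-1}(y)$ for some $y$) is unbounded unless it is empty.
   Context: $\textsc{ReLU}(x)=\max\{x,0\}$, $\textsc{Step}(x)=\mathbf 1[x\ge0]$. A $\textsc{ReLU}$+$\textsc{Step}$ network is $t_L\circ\sigma_{L-1}\circ\cdots\circ\sigma_1\circ t_1$ with affine $t_\ell:\mathbb R^{d_{\ell-1}}\to\mathbb R^{d_\ell}$ ($d_0=d_x$, $d_L=d_y$) and $\sigma_\ell$ applying to each coordinate an activation chosen per neuron from $\{\textsc{ReLU},\textsc{Step}\}$; its width is $\max\{d_1,\dots,d_{L-1}\}$. *)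

(* Defs.v *)
From mathcomp Require Import all_boot all_order all_algebra.
From mathcomp Require Import all_classical all_reals all_analysis.
Set Implicit Arguments. Unset Strict Implicit. Unset Printing Implicit Defensive.
Import Order.TTheory GRing.Theory Num.Theory.
Local Open Scope ring_scope.

Definition relu {R : realType} (x : R) : R := Num.max x 0.
Definition step {R : realType} (x : R) : R := if 0 <= x then 1 else 0.

(* NHid W b a N  : an affine layer t_l : R^n -> R^k followed by the
                   activation sigma_l, where neuron i uses Step if a i = true
                   and ReLU if a i = false, followed by the rest N. *)
Inductive net (R : realType) : nat -> nat -> Type :=
| NOut : forall n m, 'M[R]_(n, m) -> 'rV[R]_m -> net R n m
| NHid : forall n k m, 'M[R]_(n, k) -> 'rV[R]_k -> ('I_k -> bool) ->
    net R k m -> net R n m.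

Definition act {R : realType} {k : nat} (a : 'I_k -> bool) (v : 'rV[R]_k)
  : 'rV[R]_k := \row_i (if a i then step (v 0 i) else relu (v 0 i)).

Fixpoint net_eval {R : realType} {n m : nat} (N : net R n m) : 'rV[R]_n -> 'rV[R]_m :=
  match N with
  | NOut _ _ W b => fun x => x *m W + b
  | NHid _ _ _ W b a N' => fun x => net_eval N' (act a (x *m W + b))
  end.

Fixpoint width {R : realType} {n m : nat} (N : net R n m) : nat :=
  match N with
  | NOut _ _ _ _ => 0%N
  | NHid _ k _ _ _ _ N' => maxn k (width N')
  end.

Fixpoint has_step {R : realType} {n m : nat} (N : net R n m) : Prop :=
  match N with
  | NOut _ _ _ _ => False
  | NHid _ k _ _ _ a N' => (exists i : 'I_k, a i = true) \/ has_step N'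
  end.

(* Main.v *)
Require Import Defs.
From mathcomp Require Import all_boot all_order all_algebra.
From mathcomp Require Import all_classical all_reals all_analysis.
Import Order.TTheory GRing.Theory Num.Theory.
Import numFieldNormedType.Exports.
Set Implicit Arguments. Unset Strict Implicit.
Local Open Scope ring_scope.
Local Open Scope classical_set_scope.

Section Chain.
Variable R : realType.
Variable n : nat.
Notation V := 'rV[R]_n.

Fixpoint chain_in (S : set V) (p : V) (ps : seq V) (v : V) : Prop :=
  match ps with
  | [::] => forall t : R, 0 <= t -> S (p + t *: v)
  | q :: ps' => (forall t : R, 0 <= t <= 1 -> S (p + t *: (q - p))) /\ chain_in S q ps' v
  end.

Lemma cont_line (p d : V) : continuous (fun t : R => p + t *: d).
Proof.
move=> t; apply: cvgD; first exact: cvg_cst.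
by apply: cvgZl; exact: cvg_id.
Qed.

Lemma line_connected (p d : V) (A : set R) : is_interval A ->
  connected [set p + t *: d | t in A].
Proof.
move=> HA; apply: connected_continuous_connected.
  by apply/connected_intervalP.
by apply: continuous_subspaceT; exact: cont_line.
Qed.

Lemma chain_unbounded (S : set V) p ps v : v != 0 -> chain_in S p ps v ->
  ~ bounded_set (connected_component S p).
Proof.
elim: ps p => [|q ps IH] p vn0 /=.
  move=> HS Hb.
  have sub : [set p + t *: v | t in `[0, +oo[] `<=` connected_component S p.
    apply: connected_component_max.
    - by exists 0; rewrite ?scale0r ?addr0 //= in_itv /= lexx.
    - by move=> _ [t ht <-]; apply: HS; move: ht; rewrite /= in_itv /= andbT.
    - by apply: line_connected; exact: interval_is_interval.
  have [M M0 HM] := ex_strict_bound_gt0 Hb.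
  pose t := (M + `|p|) / `|v|.
  have vpos : 0 < `|v| by rewrite normr_gt0.
  have t0 : 0 <= t by rewrite divr_ge0 // addr_ge0 // ltW.
  have := HM (p + t *: v) (sub _ (ex_intro2 _ _ t _ erefl)).
  rewrite /= in_itv /= andbT t0 => /(_ isT).
  apply/negP; rewrite -leNgt.
  have : `|t *: v| <= `|p + t *: v| + `|p|.
    by have := ler_normB (p + t *: v) p; rewrite addrAC subrr add0r.
  rewrite normrZ ger0_norm // divfK ?gt_eqF //.
  by rewrite lerD2r.
move=> [Hseg Hch] Hb.
have sub : [set p + t *: (q - p) | t in `[0, 1]] `<=` connected_component S p.
  apply: connected_component_max.
  - by exists 0; rewrite ?scale0r ?addr0 //= in_itv /= lexx ler01.
  - by move=> _ [t ht <-]; apply: Hseg; move: ht; rewrite /= in_itv.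
  - by apply: line_connected; exact: interval_is_interval.
have Cq : connected_component S p q.
  apply: sub; exists 1; first by rewrite /= in_itv /= ler01 lexx.
  by rewrite scale1r addrC subrK.
apply: (IH q vn0 Hch); by rewrite -(same_connected_component Cq).
Qed.

Lemma chain_mono (S S' : set V) p ps v : S `<=` S' -> chain_in S p ps v -> chain_in S' p ps v.
Proof.
move=> SS'; elim: ps p => [|q ps IH] p /=.
  by move=> H t t0; apply: SS'; apply: H.
by move=> [H1 H2]; split; [move=> t ht; apply: SS'; apply: H1|apply: IH].
Qed.

Definition relu_v (z : V) : V := \row_i relu (z 0 i).
Definition Qp (z : V) := forall i, 0 <= z 0 i.

Lemma relu_v_id z : Qp z -> relu_v z = z.
Proof. by move=> Hz; apply/rowP => i; rewrite mxE /relu max_l. Qed.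

Lemma exit_lemma (p d : V) (i0 : 'I_n) : Qp p -> d 0 i0 < 0 ->
  exists s : R, exists j : 'I_n, [/\ 0 <= s, d 0 j < 0, p 0 j + s * d 0 j = 0 &
    forall t, 0 <= t <= s -> Qp (p + t *: d)].
Proof.
move=> Hp Hi0.
pose F := fun i : 'I_n => p 0 i / - d 0 i.
have [j Pj Hj] := @arg_minP _ R _ i0 (fun i => d 0 i < 0) F Hi0.
have dj : 0 < - d 0 j by rewrite oppr_gt0.
exists (F j), j; split => //.
- by rewrite /F divr_ge0 // ltW.
- by rewrite /F mulrAC invrN mulrN mulfK ?subrr // lt_eqF.
move=> t /andP [t0 ts] i; rewrite !mxE.
have [di|di] := leP 0 (d 0 i).
  by rewrite addr_ge0 // mulr_ge0.
have di' : 0 < - d 0 i by rewrite oppr_gt0.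
have : t <= F i by apply: le_trans ts _; apply: Hj.
rewrite /F ler_pdivlMr // mulrN => H.
by rewrite -(opprK (t * d 0 i)) subr_ge0.
Qed.

Lemma relu_ray (c : V) (j : 'I_n) t : Qp c -> c 0 j = 0 -> 0 <= t ->
  relu_v (c + t *: - delta_mx 0 j) = c.
Proof.
move=> Hc cj t0; apply/rowP => i; rewrite !mxE /relu.
have [->|ij] := eqVneq i j.
  rewrite eqxx cj add0r /= mulrN mulr1 max_r // oppr_le0 //.
by rewrite andbF /= mulr0n oppr0 mulr0 addr0 max_l.
Qed.

Lemma Qp_seg (p q : V) t : Qp p -> Qp q -> 0 <= t <= 1 -> Qp (p + t *: (q - p)).
Proof.
move=> Hp Hq /andP [t0 t1] i; rewrite !mxE.
have -> : p 0 i + t * (q 0 i - p 0 i) = (1 - t) * p 0 i + t * q 0 i.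
  by rewrite mulrBr mulrBl mul1r addrAC addrA.
by rewrite addr_ge0 // mulr_ge0 // subr_ge0.
Qed.

Lemma relu_lift_Q (S : set V) ps : forall p v, Qp p -> v != 0 -> chain_in S p ps v ->
  exists ps' v', v' != 0 /\ chain_in [set z | S (relu_v z)] p ps' v'.
Proof.
elim: ps => [|q ps IH] p v Hp vn0 /=.
  move=> HS.
  have [/existsP [i Hi]|/existsPn H] := boolP [exists i, v 0 i < 0].
    have [s [j [s0 Hj pj HQ]]] := exit_lemma Hp Hi.
    exists [:: p + s *: v], (- delta_mx 0 j); split.
      apply/negP => /eqP/rowP/(_ j); rewrite !mxE !eqxx /=.
      by move/eqP; rewrite oppr_eq0 oner_eq0.
    split => /=.
      move=> t /andP [t0 t1].
      have -> : p + t *: (p + s *: v - p) = p + (t * s) *: v.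
        by rewrite addrAC subrr add0r scalerA.
      rewrite /= relu_v_id; first by apply: HS; rewrite mulr_ge0.
      by apply: HQ; rewrite mulr_ge0 //= -{2}(mul1r s) ler_wpM2r.
    move=> t t0; rewrite /= relu_ray //.
    - by apply: HS.
    - by apply: HQ; rewrite s0 lexx.
    - by rewrite !mxE.
  exists [::], v; split => //= t t0.
  rewrite relu_v_id; first by apply: HS.
  move=> i; rewrite !mxE addr_ge0 // mulr_ge0 //.
  by move: (H i); rewrite -leNgt.
move=> [Hseg Hch].
have [/existsP [i Hi]|/existsPn H] := boolP [exists i, q 0 i < 0].
  have Hdi : (q - p) 0 i < 0.
    by rewrite !mxE subr_lt0 (lt_le_trans Hi (Hp i)).
  have [s [j [s0 Hj pj HQ]]] := exit_lemma Hp Hdi.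
  have s1 : s <= 1.
    rewrite leNgt; apply/negP => s1.
    have := HQ 1; rewrite ler01 ltW //= => /(_ isT) /(_ i).
    by rewrite scale1r addrC subrK leNgt Hi.
  exists [:: p + s *: (q - p)], (- delta_mx 0 j); split.
    apply/negP => /eqP/rowP/(_ j); rewrite !mxE !eqxx /=.
    by move/eqP; rewrite oppr_eq0 oner_eq0.
  split => /=.
    move=> t /andP [t0 t1].
    have -> : p + t *: (p + s *: (q - p) - p) = p + (t * s) *: (q - p).
      by rewrite addrAC subrr add0r scalerA.
    have ts : t * s <= s by rewrite -{2}(mul1r s) ler_wpM2r.
    rewrite /= relu_v_id; first by apply: Hseg; rewrite mulr_ge0 //= (le_trans ts).
    by apply: HQ; rewrite mulr_ge0.
  move=> t t0; rewrite /= relu_ray //.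
  - by apply: Hseg; rewrite s0 s1.
  - by apply: HQ; rewrite s0 lexx.
  - by move: pj; rewrite !mxE.
have Hq : Qp q by move=> k; move: (H k); rewrite -leNgt.
have [ps' [v' [v'n0 Hch']]] := IH q v Hq vn0 Hch.
exists (q :: ps'), v'; split => //=; split => // t ht.
by rewrite relu_v_id; [apply: Hseg|apply: Qp_seg].
Qed.

Lemma relu_lift (S : set V) q ps v : v != 0 -> chain_in S (relu_v q) ps v ->
  exists ps' v', v' != 0 /\ chain_in [set z | S (relu_v z)] q ps' v'.
Proof.
move=> vn0 Hch.
have HQ : Qp (relu_v q) by move=> i; rewrite mxE /relu le_max lexx orbT.
have [ps' [v' [v'n0 Hch']]] := relu_lift_Q HQ vn0 Hch.
exists (relu_v q :: ps'), v'; split => //=; split => // t /andP [t0 t1].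
have -> : relu_v (q + t *: (relu_v q - q)) = relu_v q.
  apply/rowP => i; rewrite !mxE /relu.
  have [qi|qi] := leP 0 (q 0 i).
    by rewrite subrr mulr0 addr0 max_l.
  rewrite sub0r max_r //.
  have -> : q 0 i + t * - q 0 i = (1 - t) * q 0 i by rewrite mulrN mulrBl mul1r.
  by rewrite mulr_ge0_le0 ?subr_ge0 // ltW.
by case: ps Hch {vn0 Hch'} => [|? ?] /=; [move=> H; have := H 0; rewrite lexx scale0r addr0; apply|move=> [H _]; have := H 0; rewrite lexx ler01 scale0r addr0; apply].
Qed.

End Chain.

Section Affine.
Variable R : realType.

Lemma affine_pull (n k : nat) (W : 'M[R]_(n, k)) (b : 'rV[R]_k) (S : set 'rV[R]_k) :
  row_full W ->
  forall ps p v, chain_in S p ps v ->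
  chain_in [set z | S (z *m W + b)] ((p - b) *m pinvmx W) (map (fun u => (u - b) *m pinvmx W) ps) (v *m pinvmx W).
Proof.
move=> HW.
have K : forall u : 'rV[R]_k, u *m pinvmx W *m W = u.
  by move=> u; apply: mulmxKpV; apply: submx_full.
elim=> [|q ps IH] p v /=.
  move=> H t t0; rewrite /= mulmxDl -scalemxAl K K addrAC subrK; exact: H.
move=> [H1 H2]; split; last exact: IH.
move=> t ht; rewrite /= mulmxDl -scalemxAl (mulmxBl ((q - b) *m pinvmx W)) !K.
rewrite (_ : q - b - (p - b) = q - p); last by rewrite opprB addrA subrK.
by rewrite addrAC subrK; apply: H1.
Qed.
End Affine.

Section Main.
Variable R : realType.

Lemma act_relu k (a : 'I_k -> bool) (z : 'rV[R]_k) : (forall i, a i = false) -> act a z = relu_v z.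
Proof. by move=> Ha; apply/rowP => i; rewrite !mxE Ha. Qed.

Lemma step_chain k (a : 'I_k -> bool) (z0 : 'rV[R]_k) i : a i ->
  let d := (if 0 <= z0 0 i then 1 else -1) *: delta_mx 0 i in
  d != 0 /\ chain_in [set z | act a z = act a z0] z0 [::] d.
Proof.
move=> ai d; split.
  apply/negP => /eqP/rowP/(_ i); rewrite /d !mxE !eqxx /= mulr1.
  by case: ifP => _; apply/eqP; rewrite ?oppr_eq0 oner_eq0.
move=> t t0 /=; apply/rowP => j; rewrite /d !mxE.
have [->|ij] := eqVneq j i.
  rewrite ai eqxx /= mulr1 /step.
  have [z0i|z0i] := boolP (0 <= z0 0 i).
    by rewrite mulr1 addr_ge0.
  rewrite mulrN1.
  have : z0 0 i - t < 0.
    by rewrite -ltNge in z0i; apply: le_lt_trans _ z0i; rewrite gerDl oppr_le0.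
  by rewrite ltNge => /negbTE ->.
by rewrite andbF /= mulr0 mulr0 addr0.
Qed.

Lemma main_chain (n m : nat) (N : net R n m) : has_step N -> (width N <= n)%N ->
  forall x : 'rV[R]_n, exists ps v, v != 0 /\
    chain_in [set z | net_eval N z = net_eval N x] x ps v.
Proof.
elim: N => [n' m' W b|n' k m' W b a N' IH] //=.
move=> Hs; rewrite geq_max => /andP [kn wN] x.
have [rf|nrf] := boolP (row_free W).
  have rk : \rank W = n' by apply/eqP; rewrite eqn_leq rank_leq_row row_leq_rank rf.
  have kn' : k = n' by apply/eqP; rewrite eqn_leq kn -{1}rk rank_leq_col.
  have Hfull : row_full W by rewrite -col_leq_rank rk kn'.
  have gx : (x *m W + b - b) *m pinvmx W = x by rewrite addrK mulmxKp.
  have vpull : forall v : 'rV[R]_k, v != 0 -> v *m pinvmx W != 0.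
    move=> v; apply: contraNneq => H.
    by rewrite -(mulmxKpV (submx_full v Hfull)) H mul0mx.
  have [/existsP [i ai]|/existsPn na] := boolP [exists i, a i].
    have [dn0 Hch] := step_chain (x *m W + b) ai.
    have := affine_pull b Hfull Hch; rewrite gx => Hch'.
    eexists; eexists; split; first exact: vpull dn0.
    apply: chain_mono Hch' => z /= ->; done.
  have na' : forall i, a i = false by move=> i; apply/negbTE.
  have HsN : has_step N'.
    by case: Hs => // [[i ai]]; move: (na' i); rewrite ai.
  have [ps [v [vn0 Hch]]] := IH HsN (leq_trans wN (eq_leq (esym kn'))) (act a (x *m W + b)).
  rewrite act_relu // in Hch.
  have [ps' [v' [v'n0 Hch']]] := relu_lift vn0 Hch.
  have := affine_pull b Hfull Hch'; rewrite gx => Hch''.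
  eexists; eexists; split; first exact: vpull v'n0.
  apply: chain_mono Hch'' => z /=; rewrite act_relu // act_relu //.
have : kermx W != 0 by rewrite kermx_eq0.
have [i Hi] : exists i, row i (kermx W) != 0.
  apply/existsP; apply: contraR nrf => /existsPn H.
  rewrite -kermx_eq0; apply/eqP/row_matrixP => i; rewrite row0.
  by apply/eqP; rewrite -[_ == _]negbK H.
move=> _.
exists [::], (row i (kermx W)); split => // t t0 /=.
by rewrite mulmxDl -scalemxAl -row_mul mulmx_ker row0 scaler0 addr0.
Qed.
End Main.

Unset Implicit Arguments.
Theorem lemma15 (R : realType) (dx dy : nat) (N : net R dx dy) :
  width N = dx -> has_step N ->
  forall (y : 'rV[R]_dy) (x : 'rV[R]_dx), net_eval N x = y ->
  ~ bounded_set (@connected_component [the normedModType R of 'rV[R]_dx]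
      (net_eval N @^-1` [set y]) x).
Proof.
move=> Hw Hs y x Hy.
have [ps [v [vn0 Hch]]] := main_chain Hs (eq_leq Hw) x.
apply: (chain_unbounded vn0); apply: chain_mono Hch => z /= ->; done.
Qed.
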